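(* Let $P$ be a finite semipure poset of length $n$ and $t\ge 1$ an integer. For a maximal chain $C=\{x_0<x_1<\dots<x_m\}$ of $P$ and $d=(d_1,\dots,d_m)\in\{0,1\}^m$, let $[C,d]$ be the set of maximal chains $\{\hat 0<(x_0,f_0)<(x_1,f_1)<\dots<(x_m,f_m)<\hat 1\}$ of $\widehat{P*T_{t,n}}$ with $r(f_i)-r(f_{i-1})=d_i$ for all $i\in[m]$. Then, as $C$ ranges over the maximal chains of $P$ (of any length $m$) and $d$ ranges over $\{0,1\}^m$, the sets $[C,d]$ partition the set of maximal chains of $\widehat{P*T_{t,n}}$, and $|[C,d]|=t^{\,d_1+\dots+d_m}$.
   Context: All posets are finite. A poset $P$ is semipure if for every $x\in P$ all maximal chains of $P_{\le x}$ have the same length, the rank $r_P(x)$. For semipure $P,Q$, the Rees product $P*Q$ is $\{(p,q)\in P\times Q: r_P(p)\ge r_Q(q)\}$ with $(p_1,q_1)\le(p_2,q_2)$ iff $p_1\le p_2$, $q_1\le q_2$, and $r_P(p_2)-r_P(p_1)\ge r_Q(q_2)-r_Q(q_1)$. $T_{t,n}$ is the poset of all sequences of elements of $\{1,\dots,t\}$ of length at most $n$ (including the empty sequence, its minimum $\hat 0_T$), ordered by ``is a prefix of''; its Hasse diagram is a complete $t$-ary tree of height $n$ rooted at the bottom, and $r(f)$ is the length of the sequence $f$. $\hat Q$ denotes $Q$ with a new minimum $\hat 0$ and new maximum $\hat 1$ adjoined. *)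

(* Defs.v *)
From HB Require Import structures.
From mathcomp Require Import all_boot all_order.
Set Implicit Arguments. Unset Strict Implicit. Unset Printing Implicit Defensive.
Import Order.TTheory.

Definition chain_in (T : eqType) (A : pred T) (lt : rel T) (s : seq T) : bool :=
  sorted lt s && all A s.

Definition maxchain_in (T : eqType) (A : pred T) (lt : rel T) (s : seq T) : Prop :=
  chain_in A lt s /\
  forall s' : seq T, chain_in A lt s' -> {subset s <= s'} -> {subset s' <= s}.

Section FinPoset.
Variables (disp : Order.disp_t) (P : finPOrderType disp).

Definition poset_lt : rel P := fun x y => (x < y)%O.

Definition downset (x : P) : pred P := fun y => (y <= x)%O.

Definition semipure : Prop :=
  forall (x : P) (s1 s2 : seq P),
    maxchain_in (downset x) poset_lt s1 -> maxchain_in (downset x) poset_lt s2 ->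
    size s1 = size s2.

Definition poset_length (n : nat) : Prop :=
  (exists s : seq P, chain_in predT poset_lt s /\ size s = n.+1) /\
  (forall s : seq P, chain_in predT poset_lt s -> size s <= n.+1).

(* rank r_P(x): length of a longest chain of P_{<=x}; for semipure P this is the
   common length of all maximal chains of P_{<=x}. *)
Definition prank (x : P) : nat :=
  \max_(k < #|P| | [exists s : (k.+1).-tuple P,
                      sorted poset_lt s && all (downset x) s]) (k : nat).

(* Rees product P * T_{t,n}: carrier inside P * seq 'I_t;
   T_{t,n} = sequences over {1..t} (here 'I_t) of length <= n, prefix order,
   rank = length. *)
Definition rees_mem (n t : nat) : pred (P * seq 'I_t) :=
  fun a => (size a.2 <= n) && (size a.2 <= prank a.1).

Definition rees_le (t : nat) : rel (P * seq 'I_t) :=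
  fun a b => [&& (a.1 <= b.1)%O, prefix a.2 b.2 &
                 prank a.1 + size b.2 <= prank b.1 + size a.2].

End FinPoset.

(* Adjoining a new minimum (inr false) and maximum (inr true) to a poset on X. *)
Definition hat_mem (X : Type) (A : pred X) : pred (X + bool) :=
  fun a => match a with inl x => A x | inr _ => true end.

Definition hat_le (X : Type) (le : rel X) : rel (X + bool) :=
  fun a b => match a, b with
             | inr false, _ => true
             | _, inr true => true
             | inl x, inl y => le x y
             | _, _ => false
             end.

Definition strict (X : eqType) (le : rel X) : rel X := fun a b => (a != b) && le a b.

Definition rees_hat_maxchain disp (P : finPOrderType disp) (n t : nat)
  (c : seq ((P * seq 'I_t) + bool)) : Prop :=
  maxchain_in (hat_mem (@rees_mem disp P n t)) (strict (hat_le (@rees_le disp P t))) c.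

(* The block [C,d]: C = x_0 < ... < x_m (size C = m+1), d = (d_1..d_m) (size d = m). *)
Definition rees_block disp (P : finPOrderType disp) (n t : nat)
  (C : seq P) (d : seq bool) (c : seq ((P * seq 'I_t) + bool)) : Prop :=
  @rees_hat_maxchain disp P n t c /\
  exists fs : seq (seq 'I_t),
    [/\ size fs = size C,
        c = inr false :: rcons [seq inl x | x <- zip C fs] (inr true) &
        forall i, 0 < i < size C ->
          size (nth [::] fs i) = size (nth [::] fs i.-1) + nat_of_bool (nth false d i.-1)].

(* Main.v *)
Require Import Defs.
From HB Require Import structures.
From mathcomp Require Import all_boot all_order zify.
Set Implicit Arguments. Unset Strict Implicit. Unset Printing Implicit Defensive.
Import Order.TTheory.

Definition comp (T : eqType) (lt : rel T) (y z : T) := y = z \/ lt y z \/ lt z y.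
Definition closedc (T : eqType) (A : pred T) (lt : rel T) (s : seq T) :=
  forall z, A z -> (forall y, y \in s -> comp lt y z) -> z \in s.

Lemma insert_sorted (T : eqType) (lt : rel T) (Htr : transitive lt) z s :
  sorted lt s -> (forall y, y \in s -> lt y z \/ lt z y) ->
  exists s', [/\ sorted lt s', size s' = (size s).+1 &
                 forall w, (w \in s') = (w == z) || (w \in s)].
Proof.
elim: s => [|y s IH] /= Hs Hc.
  by exists [:: z]; split => // w; rewrite inE orbF.
have Hs0 : sorted lt s := path_sorted Hs.
have Hall : all (lt y) s by move: Hs; rewrite path_sortedE // => /andP[].
case: (Hc y (mem_head _ _)) => Hyz.
- have [s' [Hs' Hsz Hm]] := IH Hs0 (fun w Hw => Hc w (@mem_behead _ (y :: s) _ Hw)).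
  exists (y :: s'); split.
  + rewrite /= path_sortedE // Hs' andbT; apply/allP => w; rewrite Hm => /orP[/eqP->//|Hw].
    exact: (allP Hall).
  + by rewrite /= Hsz.
  + by move=> w; rewrite !inE Hm orbCA.
- exists (z :: y :: s); split => //.
  by rewrite /= Hyz.
Qed.

Lemma pairwise_comp (T : eqType) (lt : rel T) s x y :
  pairwise lt s -> x \in s -> y \in s -> comp lt x y.
Proof.
elim: s => //= a s IH /andP[Ha Hs]; rewrite !inE => /orP[/eqP->|Hx] /orP[/eqP->|Hy].
- by left.
- by right; left; exact: (allP Ha).
- by right; right; exact: (allP Ha).
- exact: IH.
Qed.

Lemma maxchainP (T : eqType) (A : pred T) (lt : rel T)
  (Htr : transitive lt) (Hirr : irreflexive lt) s :
  maxchain_in A lt s <-> chain_in A lt s /\ closedc A lt s.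
Proof.
split.
- move=> [Hc Hmax]; split => // z Az Hcomp.
  case Hz: (z \in s) => //.
  have Hlt : forall y, y \in s -> lt y z \/ lt z y.
    move=> y Hy; case: (Hcomp y Hy) => [E|//]; by rewrite -E Hy in Hz.
  move: (Hc) => /andP[Hs HA].
  have [s' [Hs' _ Hm]] := insert_sorted Htr Hs Hlt.
  have Hc' : chain_in A lt s'.
    apply/andP; split=> //; apply/allP => w; rewrite Hm => /orP[/eqP->//|Hw]; exact: (allP HA).
  have Hsub : {subset s <= s'} by move=> w Hw; rewrite Hm Hw orbT.
  rewrite -Hz; apply: (Hmax s' Hc' Hsub); by rewrite Hm eqxx.
- move=> [Hc Hcl]; split => // s' Hc' Hsub z Hz.
  move: Hc' => /andP[Hs' HA'].
  apply: Hcl; first exact: (allP HA').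
  move=> y Hy. apply: (pairwise_comp (s:=s')) => //; first by rewrite -sorted_pairwise.
  exact: Hsub.
Qed.

Lemma sorted_nth_le (T : Type) (lt : rel T) (Htr : transitive lt) x0 s i j :
  sorted lt s -> i <= j -> j < size s ->
  nth x0 s i = nth x0 s j \/ lt (nth x0 s i) (nth x0 s j).
Proof.
move=> Hs; rewrite leq_eqVlt => /orP[/eqP->|Hij] Hj; [by left|right].
exact: (sorted_ltn_nth Htr x0 Hs i j (ltn_trans Hij Hj) Hj Hij).
Qed.

Lemma closedc_strict (T : eqType) (A : pred T) (lt : rel T) (Hirr : irreflexive lt) s w :
  closedc A lt s -> A w -> (forall y, y \in s -> lt y w \/ lt w y) -> False.
Proof.
move=> Hcl Aw Hy.
have Hw : w \in s by apply: Hcl => // y /Hy [];[right;left|right;right].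
by case: (Hy w Hw); rewrite Hirr.
Qed.

Lemma closedc_nth (T : eqType) (A : pred T) (lt : rel T)
  (Htr : transitive lt) (Hirr : irreflexive lt) x0 s :
  sorted lt s -> 0 < size s ->
  closedc A lt s <->
  [/\ forall w, A w -> lt w (nth x0 s 0) -> False,
      forall w, A w -> lt (nth x0 s (size s).-1) w -> False &
      forall i, i.+1 < size s -> forall w, A w -> lt (nth x0 s i) w ->
         lt w (nth x0 s i.+1) -> False].
Proof.
move=> Hs Hsz; split.
- move=> Hcl; split.
  + move=> w Aw Hw; apply: (closedc_strict Hirr Hcl Aw) => y Hy; right.
    rewrite -(nth_index x0 Hy).
    have Hi : index y s < size s by rewrite index_mem.
    have [<-|H] := sorted_nth_le Htr x0 Hs (leq0n (index y s)) Hi.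
    * by [].
    * exact: Htr _ _ _ Hw H.
  + move=> w Aw Hw; apply: (closedc_strict Hirr Hcl Aw) => y Hy; left.
    rewrite -(nth_index x0 Hy).
    have Hi : index y s < size s by rewrite index_mem.
    have H1 : index y s <= (size s).-1 by lia.
    have H2 : (size s).-1 < size s by lia.
    have [->|H] := sorted_nth_le Htr x0 Hs H1 H2.
    * by [].
    * exact: Htr _ _ _ H Hw.
  + move=> i Hi w Aw H1 H2; apply: (closedc_strict Hirr Hcl Aw) => y Hy.
    rewrite -(nth_index x0 Hy).
    have Hj : index y s < size s by rewrite index_mem.
    case: (leqP (index y s) i) => Hji.
    * left. have [->|H] := sorted_nth_le Htr x0 Hs Hji (ltnW Hi); first by [].
      exact: Htr _ _ _ H H1.
    * right. have [<-|H] := sorted_nth_le Htr x0 Hs Hji Hj; first by [].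
      exact: Htr _ _ _ H2 H.
- move=> [Hmin Hmax Hcov] w Aw Hc.
  case Hws: (w \in s) => //; exfalso.
  have Hstr : forall y, y \in s -> lt y w \/ lt w y.
    move=> y Hy; case: (Hc y Hy) => [E|//]; by rewrite E Hws in Hy.
  have Hall : forall j, j < size s -> lt (nth x0 s j) w.
    elim=> [|j IH] Hj.
    + by case: (Hstr _ (mem_nth x0 Hj)) => // H; case: (Hmin w Aw H).
    + have IHj := IH (ltnW Hj).
      by case: (Hstr _ (mem_nth x0 Hj)) => // H; case: (Hcov j Hj w Aw IHj H).
  apply: (Hmax w Aw); apply: Hall; lia.
Qed.

Lemma plt_trans disp (P : finPOrderType disp) : transitive (@poset_lt disp P).
Proof. move=> y x z; exact: lt_trans. Qed.
Lemma plt_irr disp (P : finPOrderType disp) : irreflexive (@poset_lt disp P).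
Proof. move=> x; exact: ltxx. Qed.

Lemma chain_size_card disp (P : finPOrderType disp) (A : pred P) s :
  chain_in A (@poset_lt disp P) s -> size s <= #|P|.
Proof.
move=> /andP[Hs _].
have Hu : uniq s := sorted_uniq (@plt_trans _ P) (@plt_irr _ P) Hs.
by rewrite -(card_uniqP Hu); exact: max_card.
Qed.

Lemma prank_ub disp (P : finPOrderType disp) (x : P) s :
  chain_in (downset x) (@poset_lt disp P) s -> size s <= (prank x).+1.
Proof.
move=> Hc; have Hcard := chain_size_card Hc.
case: s Hc Hcard => [//|a s] Hc Hcard /=.
have Hk : size s < #|P| by [].
rewrite ltnS /prank.
have Hsz : size (a :: s) == (size s).+1 by [].
apply: (@leq_bigmax_cond _ _ (fun k : 'I_#|P| => (k : nat)) (Ordinal Hk)).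
apply/existsP; exists (Tuple Hsz); exact: Hc.
Qed.

Lemma prank_ex disp (P : finPOrderType disp) (x : P) :
  exists s, chain_in (downset x) (@poset_lt disp P) s /\ size s = (prank x).+1.
Proof.
have Hc1 : chain_in (downset x) (@poset_lt disp P) [:: x] by rewrite /chain_in /= /downset lexx.
have H0 : 0 < #|P| by have := chain_size_card Hc1.
pose A := [pred k : 'I_#|P| | [exists s : (k.+1).-tuple P,
                      sorted (@poset_lt disp P) s && all (downset x) s]].
have HA : 0 < #|A|.
  apply/card_gt0P; exists (Ordinal H0); rewrite inE.
  apply/existsP; exists [tuple x]; exact: Hc1.
have [i0 Hi0 HE] := @eq_bigmax_cond _ A (fun k => (k : nat)) HA.
have -> : prank x = i0 by rewrite /prank -HE.
move: Hi0; rewrite inE => /existsP [s Hs].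
by exists s; split => //; rewrite size_tuple.
Qed.

Lemma prank_lt disp (P : finPOrderType disp) (x y : P) :
  (y < x)%O -> prank y < prank x.
Proof.
move=> Hyx; have [s [Hc Hsz]] := prank_ex y.
move: (Hc) => /andP[Hs Ha].
have Hlt : forall w, w \in s -> poset_lt w x \/ poset_lt x w.
  move=> w Hw; left; have := allP Ha w Hw; rewrite /downset /poset_lt => Hwy.
  exact: le_lt_trans Hwy Hyx.
have [s' [Hs' Hsz' Hm]] := insert_sorted (@plt_trans _ P) Hs Hlt.
have Hc' : chain_in (downset x) (@poset_lt disp P) s'.
  apply/andP; split => //; apply/allP => w; rewrite Hm => /orP[/eqP->|Hw].
  - by rewrite /downset lexx.
  - have := allP Ha w Hw; rewrite /downset => Hwy; exact: le_trans Hwy (ltW Hyx).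
have := prank_ub Hc'; rewrite Hsz' Hsz; lia.
Qed.

Lemma prank_len disp (P : finPOrderType disp) n (x : P) :
  poset_length P n -> prank x <= n.
Proof.
move=> [_ Hl]; have [s [Hc Hsz]] := prank_ex x.
have : size s <= n.+1.
  apply: Hl; move: Hc => /andP[Hs _]; apply/andP; split => //; exact: all_predT.
by rewrite Hsz.
Qed.

Lemma prank_chain disp (P : finPOrderType disp) (C : seq P) x0 i :
  semipure P -> maxchain_in predT (@poset_lt disp P) C -> i < size C ->
  prank (nth x0 C i) = i.
Proof.
move=> Hsp HC Hi.
have Htr := @plt_trans _ P; have Hirr := @plt_irr _ P.
move: (HC) => /(maxchainP _ Htr Hirr) [/andP[HCs _] HCcl].
set x := nth x0 C i.
set D := take i.+1 C.
have HszD : size D = i.+1 by rewrite /D size_takel.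
have HnD : forall j, j < i.+1 -> nth x0 D j = nth x0 C j by move=> j Hj; rewrite /D nth_take.
have HDc : chain_in (downset x) (@poset_lt disp P) D.
  apply/andP; split; first exact: take_sorted.
  apply/(all_nthP x0) => j; rewrite HszD => Hj; rewrite HnD // /downset /x.
  have Hji : j <= i by lia.
  have [->|H] := sorted_nth_le Htr x0 HCs Hji Hi; [by []|exact: ltW].
have HDm : maxchain_in (downset x) (@poset_lt disp P) D.
  apply/(maxchainP _ Htr Hirr); split => // z Hz Hcz.
  have HzC : z \in C.
    apply: HCcl => // y Hy; rewrite -(nth_index x0 Hy).
    have Hj : index y C < size C by rewrite index_mem.
    case: (leqP (index y C) i) => Hji.
    - apply: Hcz; rewrite -HnD //; apply: mem_nth; rewrite HszD //.
    - right; right; rewrite /poset_lt; apply: le_lt_trans Hz _.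
      exact: (sorted_ltn_nth Htr x0 HCs i (index y C) Hi Hj Hji).
  rewrite -(nth_index x0 HzC).
  have Hj : index z C < size C by rewrite index_mem.
  case: (leqP (index z C) i) => Hji.
  - rewrite -HnD //; apply: mem_nth; rewrite HszD //.
  - exfalso; have := sorted_ltn_nth Htr x0 HCs i (index z C) Hi Hj Hji.
    rewrite (nth_index x0 HzC) /poset_lt => H; move: Hz; rewrite /downset -/x => Hz.
    by have := lt_le_trans H Hz; rewrite ltxx.
have [L [HLc HLsz]] := prank_ex x.
have HLm : maxchain_in (downset x) (@poset_lt disp P) L.
  apply/(maxchainP _ Htr Hirr); split => // z Hz Hcz.
  case HzL: (z \in L) => //; exfalso.
  have Hlt : forall w, w \in L -> poset_lt w z \/ poset_lt z w.
    move=> w Hw; case: (Hcz w Hw) => [E|//]; by rewrite E HzL in Hw.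
  move: (HLc) => /andP[HLs HLa].
  have [s' [Hs' Hsz' Hm]] := insert_sorted Htr HLs Hlt.
  have Hc' : chain_in (downset x) (@poset_lt disp P) s'.
    apply/andP; split => //; apply/allP => w; rewrite Hm => /orP[/eqP->//|Hw].
    exact: (allP HLa).
  have := prank_ub Hc'; rewrite Hsz' HLsz; lia.
have := Hsp x L D HLm HDm; rewrite HLsz HszD; lia.
Qed.

Lemma prefix_eq (T : eqType) (f g : seq T) : prefix f g -> size g <= size f -> f = g.
Proof. rewrite prefixE => /eqP E H; by rewrite -E take_oversize. Qed.

Lemma rle_trans disp (P : finPOrderType disp) t : transitive (@rees_le disp P t).
Proof.
move=> b a c /and3P[H1 H2 H3] /and3P[H4 H5 H6]; apply/and3P; split.
- exact: le_trans H1 H4.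
- exact: prefix_trans H2 H5.
- lia.
Qed.

Lemma rle_same disp (P : finPOrderType disp) t (a b : P * seq 'I_t) :
  rees_le a b -> a.1 = b.1 -> a = b.
Proof.
case: a b => [p f] [q g] /and3P[_ H2 H3] /= E; subst q; simpl in H2, H3; congr pair.
apply: prefix_eq H2 _ => /=; lia.
Qed.

Lemma rle_anti disp (P : finPOrderType disp) t (a b : P * seq 'I_t) :
  rees_le a b -> rees_le b a -> a = b.
Proof.
move=> H1 H2; have E : a.1 = b.1.
  by apply: le_anti; move: H1 H2 => /and3P[-> _ _] /and3P[-> _ _].
exact: rle_same H1 E.
Qed.

Lemma strict_trans (X : eqType) (le : rel X) : transitive le ->
  (forall a b, le a b -> le b a -> a = b) -> transitive (strict le).
Proof.
move=> Htr Hanti b a c /andP[Hab Hle1] /andP[Hbc Hle2]; apply/andP; split;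
  last exact: Htr Hle1 Hle2.
apply/eqP => E; subst c; move/eqP: Hab; apply; exact: Hanti Hle1 Hle2.
Qed.

Lemma strict_irr (X : eqType) (le : rel X) : irreflexive (strict le).
Proof. by move=> a; rewrite /strict eqxx. Qed.

Lemma hat_trans (X : Type) (le : rel X) : transitive le -> transitive (hat_le le).
Proof. move=> Htr b a c; case: a => [a|[]]; case: b => [b|[]]; case: c => [c|[]] //=; exact: Htr. Qed.

Lemma hat_anti (X : Type) (le : rel X) : (forall a b, le a b -> le b a -> a = b) ->
  forall a b, hat_le le a b -> hat_le le b a -> a = b.
Proof. move=> H a b; case: a => [a|[]]; case: b => [b|[]] //= H1 H2; by rewrite (H _ _ H1 H2). Qed.

Lemma rlt_fst disp (P : finPOrderType disp) t (a b : P * seq 'I_t) :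
  strict (@rees_le disp P t) a b -> (a.1 < b.1)%O.
Proof.
move=> /andP[Hne Hle]; rewrite lt_neqAle; move: (Hle) => /and3P[-> _ _]; rewrite andbT.
apply/eqP => E; move/eqP: Hne; apply; exact: rle_same.
Qed.

Lemma rlt_of disp (P : finPOrderType disp) t (a b : P * seq 'I_t) :
  rees_le a b -> a.1 != b.1 -> strict (@rees_le disp P t) a b.
Proof.
move=> H1 H2; apply/andP; split => //; apply/eqP => E; move/eqP: H2; apply; by rewrite E.
Qed.

Lemma G1 disp (P : finPOrderType disp) n t (p w : P) (f : seq 'I_t) :
  rees_mem n (p,f) -> (w < p)%O ->
  exists g, rees_mem n (w,g) /\ rees_le (w,g) (p,f).
Proof.
move=> /andP[/= Hn Hr] Hwp; have Hrk := prank_lt Hwp.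
exists (take (size f - (prank p - prank w)) f); rewrite /rees_mem /rees_le /= size_take_min.
rewrite (ltW Hwp) prefix_take /=; split; try (apply/andP; split); lia.
Qed.

Lemma G2 disp (P : finPOrderType disp) n t (p w : P) (f : seq 'I_t) :
  rees_mem n (p,f) -> (p < w)%O -> rees_mem n (w,f) /\ rees_le (p,f) (w,f).
Proof.
move=> /andP[/= Hn Hr] Hpw; have Hrk := prank_lt Hpw.
rewrite /rees_mem /rees_le /= (ltW Hpw) prefix_refl /=; split; [apply/andP; split|]; lia.
Qed.

Lemma G3 disp (P : finPOrderType disp) n t (p1 p2 w : P) (f1 f2 : seq 'I_t) :
  rees_mem n (p2,f2) -> rees_mem n (p1,f1) -> rees_le (p1,f1) (p2,f2) ->
  (p1 < w)%O -> (w < p2)%O ->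
  exists g, [/\ rees_mem n (w,g), rees_le (p1,f1) (w,g) & rees_le (w,g) (p2,f2)].
Proof.
move=> /andP[/= Hn2 Hr2] /andP[/= Hn1 Hr1] /and3P[/= _ Hpre H3] H1 H2.
simpl in *; have R1 := prank_lt H1; have R2 := prank_lt H2; have Hs : size f1 <= size f2 := size_prefix Hpre.
exists (take (maxn (size f1) (size f2 - (prank p2 - prank w))) f2).
have Hsz : size (take (maxn (size f1) (size f2 - (prank p2 - prank w))) f2)
           = maxn (size f1) (size f2 - (prank p2 - prank w)).
  rewrite size_takel //; lia.
have Hpf : prefix f1 (take (maxn (size f1) (size f2 - (prank p2 - prank w))) f2).
  move: Hpre; rewrite !prefixE => /eqP E; rewrite take_takel; [by rewrite E| by rewrite leq_max leqnn].
rewrite /rees_mem /rees_le /= Hsz Hpf prefix_take (ltW H1) (ltW H2) /=.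
split; [apply/andP; split| |]; lia.
Qed.

Definition enc disp (P : finPOrderType disp) t (m : seq (P * seq 'I_t)) :
  seq ((P * seq 'I_t) + bool) := inr false :: rcons [seq inl x | x <- m] (inr true).

Lemma enc_chain disp (P : finPOrderType disp) n t (m : seq (P * seq 'I_t)) :
  chain_in (hat_mem (@rees_mem disp P n t)) (strict (hat_le (@rees_le disp P t))) (enc m)
  = all (@rees_mem disp P n t) m && sorted (strict (@rees_le disp P t)) m.
Proof.
rewrite /chain_in /enc /= all_rcons /= all_map andbC; congr andb.
rewrite rcons_path; case: m => [|a m] //=.
rewrite last_map /= andbT.
by rewrite path_map.
Qed.

Lemma nth_enc disp (P : finPOrderType disp) t (a0 : P * seq 'I_t) m i :
  i <= (size m).+1 ->
  nth (inr false) (enc m) i =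
  if i == 0 then inr false else if i <= size m then inl (nth a0 m i.-1) else inr true.
Proof.
case: i => [|i] //= Hi; rewrite nth_rcons size_map.
case: (ltngtP i (size m)) => H.
- by rewrite (nth_map a0).
- lia.
- by [].
Qed.

Lemma size_enc disp (P : finPOrderType disp) t (m : seq (P * seq 'I_t)) :
  size (enc m) = (size m).+2.
Proof. by rewrite /enc /= size_rcons size_map. Qed.

Lemma hlt_trans disp (P : finPOrderType disp) t :
  transitive (strict (hat_le (@rees_le disp P t))).
Proof. apply: strict_trans; [apply: hat_trans; exact: rle_trans | apply: hat_anti; exact: rle_anti]. Qed.

Lemma rlt_trans disp (P : finPOrderType disp) t :
  transitive (strict (@rees_le disp P t)).
Proof. apply: strict_trans; [exact: rle_trans | exact: rle_anti]. Qed.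

Lemma hlt_inrT disp (P : finPOrderType disp) t w :
  strict (hat_le (@rees_le disp P t)) (inr true) w = false.
Proof. by case: w => [a|[]]. Qed.

Lemma hlt_inrF disp (P : finPOrderType disp) t w :
  strict (hat_le (@rees_le disp P t)) w (inr false) = false.
Proof. by case: w => [a|[]]. Qed.

Lemma enc_max disp (P : finPOrderType disp) n t (p0 : P) (m : seq (P * seq 'I_t)) :
  @rees_hat_maxchain disp P n t (enc m) <->
  [/\ all (@rees_mem disp P n t) m, sorted (strict (@rees_le disp P t)) m &
      maxchain_in predT (@poset_lt disp P) (map fst m)].
Proof.
have Hhtr := @hlt_trans disp P t.
have Hhirr : irreflexive (strict (hat_le (@rees_le disp P t))) := @strict_irr _ _.
have Hrtr := @rlt_trans disp P t.
have Hptr := @plt_trans _ P; have Hpirr := @plt_irr _ P.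
pose a0 := (p0, [::] : seq 'I_t).
have Hsize := size_enc m.
split.
- move=> /(maxchainP _ Hhtr Hhirr) [Hch Hcl].
  move: (Hch) => /andP[Hencs _].
  move: Hch; rewrite enc_chain => /andP[Hall Hsort].
  have [Hmin Hmax Hcov] := (closedc_nth _ Hhtr Hhirr (inr false) Hencs (ltac:(by rewrite Hsize))).1 Hcl.
  have Hm0 : 0 < size m.
    case: m Hsize Hcov {Hall Hsort Hmin Hmax Hcl Hencs} => // Hsize Hcov; exfalso.
    apply: (Hcov 0 (ltac:(by [])) (inl a0)) => //.
  have Hfs : sorted (@poset_lt disp P) (map fst m).
    apply: (@homo_sorted _ _ fst _ _ _ m Hsort) => a b; exact: rlt_fst.
  have Hszm : size (map fst m) = size m by rewrite size_map.
  have Hmem : forall i, i < size m -> @rees_mem disp P n t (nth a0 m i).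
    by move=> i Hi; exact: (all_nthP a0 Hall).
  split => //.
  apply/(maxchainP _ Hptr Hpirr); split; first by rewrite /chain_in Hfs all_predT.
  apply/(closedc_nth _ Hptr Hpirr p0 Hfs (ltac:(by rewrite Hszm))); split.
  + move=> w _ Hw; rewrite (nth_map a0) // in Hw.
    have := Hmem 0 Hm0; case E: (nth a0 m 0) Hw => [p f] /= Hw Hm.
    have [g [Hg Hle]] := G1 Hm Hw.
    apply: (Hcov 0 (ltac:(by rewrite Hsize)) (inl (w,g))) => //.
    rewrite (nth_enc a0) // Hm0 /= E; apply: rlt_of => //=.
    by rewrite (lt_eqF Hw).
  + move=> w _ Hw; rewrite Hszm (nth_map a0) in Hw; last by lia.
    have := Hmem (size m).-1 (ltac:(lia)); case E: (nth a0 m (size m).-1) Hw => [p f] /= Hw Hm.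
    have [Hg Hle] := G2 Hm Hw.
    apply: (Hcov (size m) (ltac:(by rewrite Hsize)) (inl (w,f))) => //.
    + rewrite (nth_enc a0) // leqnn E /=.
      have -> : (size m == 0) = false by lia.
      apply: rlt_of => //=; by rewrite (lt_eqF Hw).
    + by rewrite (nth_enc a0) //= ltnn.
  + move=> i Hi w _ H1 H2; rewrite Hszm in Hi; rewrite !(nth_map a0) in H1 H2; try lia.
    have Hrl : rees_le (nth a0 m i) (nth a0 m i.+1).
      by have /andP[] := sorted_ltn_nth Hrtr a0 Hsort i i.+1 (ltnW Hi) Hi (ltnSn i).
    have := Hmem i (ltac:(lia)); have := Hmem i.+1 Hi.
    case E1: (nth a0 m i) H1 Hrl => [p1 f1]; case E2: (nth a0 m i.+1) H2 => [p2 f2] /= H2 H1 Hrl Hm2 Hm1.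
    have [g [Hg Hle1 Hle2]] := G3 Hm2 Hm1 Hrl H1 H2.
    have Hi2 : i.+2 < size (enc m) by rewrite Hsize !ltnS ltnW.
    apply: (Hcov i.+1 Hi2 (inl (w,g))) ; first exact: Hg.
    + rewrite (nth_enc a0) /=; last by apply: ltnW; exact: ltnW Hi.
      have -> : i < size m by exact: ltnW Hi.
      rewrite E1; apply: rlt_of => //=; by rewrite (lt_eqF H1).
    + rewrite (nth_enc a0) /=; last by rewrite ltnS (ltnW Hi).
      rewrite Hi E2; apply: rlt_of => //=; by rewrite (lt_eqF H2).
- move=> [Hall Hsort Hmc].
  have Hencs : sorted (strict (hat_le (@rees_le disp P t))) (enc m).
    by have := enc_chain n m; rewrite Hall Hsort => /andP[].
  apply/(maxchainP _ Hhtr Hhirr); split; first by rewrite enc_chain Hall Hsort.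
  move: Hmc => /(maxchainP _ Hptr Hpirr) [/andP[HCs _] HCcl].
  have Hszm : size (map fst m) = size m by rewrite size_map.
  have Hm0 : 0 < size m.
    case: m Hszm HCcl {Hall Hsort Hencs Hsize HCs} => //= _ HCcl.
    have : p0 \in [::] by apply: HCcl.
    by [].
  have [Pmin Pmax Pcov] := (closedc_nth _ Hptr Hpirr p0 HCs (ltac:(by rewrite Hszm))).1 HCcl.
  apply/(closedc_nth _ Hhtr Hhirr (inr false) Hencs (ltac:(by rewrite Hsize))); split.
  + by move=> w _; rewrite (nth_enc a0) //= hlt_inrF.
  + by move=> w _; rewrite Hsize (nth_enc a0) //= ltnn hlt_inrT.
  + move=> i Hi w _ H1 H2; rewrite Hsize in Hi.
    have Hi' : i <= size m := Hi.
    rewrite (nth_enc a0) in H1; last exact: leqW Hi'.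
    rewrite (nth_enc a0) in H2; last exact: Hi'.
    case: w H1 H2 => [[z g]|[]] H1 H2; last first.
    * by rewrite hlt_inrF in H1.
    * by rewrite hlt_inrT in H2.
    case: i Hi Hi' H1 H2 => [|i] Hi Hi' H1 H2.
    * move: H2; rewrite /= Hm0 => /rlt_fst /= H2.
      apply: (Pmin z isT); by rewrite (nth_map a0).
    * move: H1; rewrite /=.
      have -> : i < size m by exact: Hi'.
      move=> /rlt_fst /= H1.
      case: (ltngtP i.+1 (size m)) H2 => Hc H2.
      -- move: H2; rewrite /= ?Hc => /rlt_fst /= H2.
         apply: (Pcov i _ z isT); first by rewrite Hszm.
         ++ by rewrite (nth_map a0) //; exact: ltnW Hc.
         ++ by rewrite (nth_map a0).
      -- by rewrite ltnNge Hi' in Hc.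
      -- apply: (Pmax z isT); rewrite Hszm -Hc /= (nth_map a0) //.
Qed.

Lemma sorted_from_nth (T : Type) (r : rel T) x0 s :
  (forall i, i.+1 < size s -> r (nth x0 s i) (nth x0 s i.+1)) -> sorted r s.
Proof. case: s => //= a s H; apply/(pathP x0) => i Hi; exact: (H i Hi). Qed.

Lemma maxchain_nonempty disp (P : finPOrderType disp) (p0 : P) C :
  maxchain_in predT (@poset_lt disp P) C -> 0 < size C.
Proof.
move=> /(maxchainP _ (@plt_trans _ P) (@plt_irr _ P)) [_ Hcl].
case: C Hcl => // Hcl; have : p0 \in [::] by apply: Hcl.
by [].
Qed.

Lemma enc_inj disp (P : finPOrderType disp) t (m1 m2 : seq (P * seq 'I_t)) :
  enc m1 = enc m2 -> m1 = m2.
Proof.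
rewrite /enc => -[] /rcons_inj [] E.
have Hi : injective (@inl (P * seq 'I_t) bool) by move=> x y [].
by apply: (inj_map Hi).
Qed.

Lemma all_inl_map (A B : Type) (s : seq (A + B)) :
  all (fun y => if y is inl _ then true else false) s ->
  [seq inl x | x <- pmap (fun y => if y is inl a then Some a else None) s] = s.
Proof. elim: s => //= -[a|b] s IH /= H //; by rewrite IH. Qed.

Lemma hat_enc disp (P : finPOrderType disp) n t c :
  @rees_hat_maxchain disp P n t c -> exists m, c = enc m.
Proof.
have Hhtr := @hlt_trans disp P t.
have Hhirr : irreflexive (strict (hat_le (@rees_le disp P t))) := @strict_irr _ _.
move=> /(maxchainP _ Hhtr Hhirr) [/andP[Hs _] Hcl].
have Hu := sorted_uniq Hhtr Hhirr Hs.
have Hc0 : 0 < size c.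
  case: c Hcl {Hs Hu} => // Hcl.
  have : (inr false : (P * seq 'I_t) + bool) \in [::] by apply: Hcl.
  by [].
have [Hmin Hmax _] := (closedc_nth _ Hhtr Hhirr (inr false) Hs Hc0).1 Hcl.
have Hh : nth (inr false) c 0 = inr false.
  case E: (nth (inr false) c 0) Hmin => [a|[]] // Hmin; exfalso; by apply: (Hmin (inr false)).
have Hl : nth (inr false) c (size c).-1 = inr true.
  case E: (nth (inr false) c (size c).-1) Hmax => [a|[]] // Hmax; exfalso; by apply: (Hmax (inr true)).
case: c Hc0 Hh Hl Hu {Hs Hcl Hmin Hmax} => // h c' _ /= Hh; subst h.
case/lastP: c' => [|mid l] /=; first by move=> [].
rewrite size_rcons /= nth_rcons ltnn eqxx => -> /andP[H1].
rewrite rcons_uniq => /andP[H2 _].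
exists (pmap (fun y => if y is inl a then Some a else None) mid).
rewrite /enc all_inl_map //.
apply/allP => y Hy; case: y Hy => [a|[]] // Hy.
- by move: H2; rewrite Hy.
- by move: H1; rewrite mem_rcons inE Hy orbT.
Qed.

Lemma part2 disp (P : finPOrderType disp) n t (C1 C2 : seq P) (d1 d2 : seq bool) c :
  size d1 = (size C1).-1 -> size d2 = (size C2).-1 ->
  @rees_block disp P n t C1 d1 c -> @rees_block disp P n t C2 d2 c -> C1 = C2 /\ d1 = d2.
Proof.
move=> Hd1 Hd2 [_ [fs1 [Hf1 Ec1 Hi1]]] [_ [fs2 [Hf2 Ec2 Hi2]]].
have Ez : zip C1 fs1 = zip C2 fs2 by apply: enc_inj; rewrite /enc -Ec1 -Ec2.
have EC : C1 = C2.
  by have := congr1 (@unzip1 _ _) Ez; rewrite !unzip1_zip ?Hf1 ?Hf2.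
have Efs : fs1 = fs2.
  by have := congr1 (@unzip2 _ _) Ez; rewrite !unzip2_zip ?Hf1 ?Hf2.
subst C2 fs2; split => //.
apply: (@eq_from_nth _ false); first by rewrite Hd1 Hd2.
move=> i Hi; rewrite Hd1 in Hi.
have Hi' : 0 < i.+1 < size C1 by apply/andP; split => //; move: Hi; clear; lia.
move: (Hi1 _ Hi') (Hi2 _ Hi') => /= -> /eqP; rewrite eqn_add2l.
by case: (nth false d1 i); case: (nth false d2 i).
Qed.

Lemma part1 disp (P : finPOrderType disp) n t (p0 : P) c :
  semipure P -> @rees_hat_maxchain disp P n t c ->
  exists (C : seq P) (d : seq bool),
    [/\ maxchain_in predT (@poset_lt disp P) C, size d = (size C).-1
      & @rees_block disp P n t C d c].
Proof.
move=> Hsp Hc; have [m Em] := hat_enc Hc; subst c.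
have [Hall Hsort HC] := (enc_max n p0 m).1 Hc.
have Hm0 := maxchain_nonempty p0 HC; rewrite size_map in Hm0.
pose a0 := (p0, [::] : seq 'I_t).
case: m Hc Hall Hsort HC Hm0 => [//|a m'] Hc Hall Hsort HC _.
exists (map fst (a :: m')), (pairmap (fun x y : P * seq 'I_t => size y.2 != size x.2) a m').
split => //; first by rewrite size_pairmap size_map.
split => //; exists (map snd (a :: m')); split.
- by rewrite !size_map.
- by have := zip_unzip (a :: m'); rewrite /unzip1 /unzip2 => ->.
- move=> i /andP[Hi0 Hi]; rewrite size_map in Hi.
  have Hrk : forall j, j < size (a :: m') -> prank (nth a0 (a :: m') j).1 = j.
    move=> j Hj; have Hj' : j < size (map fst (a :: m')) by rewrite size_map.
    have := prank_chain p0 Hsp HC Hj'.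
    by rewrite (nth_map a0).
  have Hi1 : i.-1 < size (a :: m') by move: Hi; clear; lia.
  have Hi2 : i.-1 < i by move: Hi0; clear; lia.
  have Hrl : rees_le (nth a0 (a::m') i.-1) (nth a0 (a::m') i).
    by have /andP[] := sorted_ltn_nth (@rlt_trans disp P t) a0 Hsort i.-1 i Hi1 Hi Hi2.
  rewrite !(nth_map a0) // (nth_pairmap a0); last by move: Hi Hi0; clear => /=; lia.
  have -> : nth a0 m' i.-1 = nth a0 (a :: m') i by case: i Hi0 {Hi Hrl Hi1 Hi2}.
  move: (Hrk _ Hi1) (Hrk _ Hi) Hrl Hi0.
  case: (nth a0 (a :: m') i.-1) => [p1 f1]; case: (nth a0 (a :: m') i) => [p2 f2] /= E1 E2.
  move=> /and3P[_ Hpre Hr] Hi0; simpl in Hpre, Hr.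
  have Hs : size f1 <= size f2 := size_prefix Hpre.
  rewrite E1 E2 in Hr; move: Hs Hr Hi0; clear.
  case: eqP => /= E; lia.
Qed.

Lemma sf_step (d : seq bool) i : i < size d ->
  sumn (take i.+1 [seq nat_of_bool b | b <- d]) =
  sumn (take i [seq nat_of_bool b | b <- d]) + nth false d i.
Proof. move=> Hi; rewrite (take_nth 0) ?size_map // sumn_rcons (nth_map false) //. Qed.

Lemma sf_le (d : seq bool) i : sumn (take i [seq nat_of_bool b | b <- d]) <= i.
Proof.
elim: d i => [|b d IH] [|i] //=.
by have := IH i; case: b => /=; lia.
Qed.

Lemma sf_mono (d : seq bool) i j : i <= j ->
  sumn (take i [seq nat_of_bool b | b <- d]) <= sumn (take j [seq nat_of_bool b | b <- d]).
Proof.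
elim: d i j => [|b d IH] [|i] [|j] //= Hij; rewrite ?take0 //.
by rewrite leq_add2l; exact: IH.
Qed.

Lemma rle_refl disp (P : finPOrderType disp) t (a : P * seq 'I_t) : rees_le a a.
Proof. by rewrite /rees_le lexx prefix_refl leqnn. Qed.

Lemma part3 disp (P : finPOrderType disp) n t (p0 : P) (C : seq P) (d : seq bool) :
  semipure P -> poset_length P n ->
  maxchain_in predT (@poset_lt disp P) C -> size d = (size C).-1 ->
  exists l : seq (seq ((P * seq 'I_t) + bool)),
    [/\ uniq l, (forall c, c \in l <-> @rees_block disp P n t C d c)
      & size l = t ^ sumn [seq nat_of_bool b | b <- d]].
Proof.
move=> Hsp Hlen HC Hd.
pose k := sumn [seq nat_of_bool b | b <- d].
pose sf i := sumn (take i [seq nat_of_bool b | b <- d]).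
pose mk (w : seq 'I_t) := [seq take (sf i) w | i <- iota 0 (size C)].
pose a0 := (p0, [::] : seq 'I_t).
have HC0 := maxchain_nonempty p0 HC.
have Hrk : forall i, i < size C -> prank (nth p0 C i) = i.
  by move=> i Hi; exact: prank_chain.
have Hsfle : forall i, sf i <= i by move=> i; exact: sf_le.
have Hsflast : sf (size C).-1 = k by rewrite /sf -Hd take_oversize // size_map.
have Hsfk : forall i, i < size C -> sf i <= k.
  move=> i Hi; rewrite -Hsflast; apply: sf_mono; move: Hi; clear; lia.
have Hsfstep : forall i, i < size d -> sf i.+1 = sf i + nth false d i.
  by move=> i Hi; exact: sf_step.
have Hsz_mk : forall w, size (mk w) = size C by move=> w; rewrite size_map size_iota.
have Hnth_mk : forall w i, i < size C -> nth [::] (mk w) i = take (sf i) w.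
  by move=> w i Hi; rewrite (nth_map 0) ?size_iota // nth_iota.
have HCs : sorted (@poset_lt disp P) C.
  by move: HC => /(maxchainP _ (@plt_trans _ P) (@plt_irr _ P)) [/andP[]].
exists [seq enc (zip C (mk (val w))) | w <- enum {: k.-tuple 'I_t}].
split.
- rewrite map_inj_uniq ?enum_uniq // => w1 w2 /enc_inj E.
  have E2 : mk w1 = mk w2.
    by have := congr1 (@unzip2 _ _) E; rewrite !unzip2_zip ?Hsz_mk.
  have HCl : (size C).-1 < size C by rewrite ltn_predL.
  have := congr1 (fun s => nth [::] s (size C).-1) E2; rewrite /= !Hnth_mk // Hsflast.
  rewrite !take_oversize ?size_tuple // => Ew; exact: val_inj.
- move=> c; split.
  + move=> /mapP [w _ ->]; split.
    * apply/(enc_max n p0 _).2; split.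
      -- apply/(all_nthP a0) => i; rewrite size_zip Hsz_mk minnn => Hi.
         rewrite nth_zip ?Hsz_mk // Hnth_mk // /rees_mem /= size_takel ?size_tuple ?Hsfk //.
         have Hn := prank_len (nth p0 C i) Hlen; rewrite Hrk // in Hn.
         rewrite Hrk // Hsfle andbT; exact: leq_trans (Hsfle i) Hn.
      -- apply: (@sorted_from_nth _ _ a0) => i; rewrite size_zip Hsz_mk minnn => Hi.
         have Hi' : i < size C by move: Hi; clear; lia.
         have Hid : i < size d by rewrite Hd; move: Hi; clear; lia.
         rewrite !nth_zip ?Hsz_mk // !Hnth_mk //.
         have Hlt : (nth p0 C i < nth p0 C i.+1)%O.
           exact: (sorted_ltn_nth (@plt_trans _ P) p0 HCs i i.+1 Hi' Hi (ltnSn i)).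
         apply: rlt_of => /=; last by rewrite (lt_eqF Hlt).
         have Hk1 := Hsfk _ Hi'; have Hk2 := Hsfk _ Hi.
         have Hst := Hsfstep i Hid.
         apply/and3P; split => /=.
         ++ exact: ltW.
         ++ have Hm : sf i <= sf i.+1 by rewrite Hst leq_addr.
            by rewrite prefixE size_takel ?size_tuple // take_takel ?eqxx.
         ++ rewrite !size_takel ?size_tuple // !Hrk // Hst.
            case: (nth false d i) => /=; move: (sf i) => s; clear; lia.
      -- have -> : map fst (zip C (mk w)) = C by apply: unzip1_zip; rewrite Hsz_mk.
         exact: HC.
    * exists (mk w); split => //.
      move=> i /andP[Hi0 Hi]; rewrite !Hnth_mk //; last by move: Hi; clear; lia.
      rewrite !size_takel ?size_tuple ?Hsfk //; last by move: Hi; clear; lia.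
      case: i Hi0 Hi => [//|i] _ Hi /=; apply: Hsfstep; rewrite Hd; move: Hi; clear; lia.
  + move=> [Hc [fs [Hfs Ec Hinc]]].
    rewrite Ec in Hc; have [Hall Hsort _] := (enc_max n p0 _).1 Hc.
    have Hszz : size (zip C fs) = size C by rewrite size_zip Hfs minnn.
    have Hszfs : forall i, i < size C -> size (nth [::] fs i) = sf i.
      elim=> [|i IH] Hi.
      - have := all_nthP a0 Hall 0 (ltac:(by rewrite Hszz)).
        rewrite nth_zip // /rees_mem /= Hrk // => /andP[_].
        by rewrite leqn0 /sf take0 => /eqP ->.
      - have Hi' : 0 < i.+1 < size C by rewrite Hi.
        have := Hinc i.+1 Hi'; rewrite /= IH ?(ltnW Hi) // => ->.
        rewrite Hsfstep // Hd; move: Hi; clear; lia.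
    pose w0 := nth [::] fs (size C).-1.
    have HCl : (size C).-1 < size C by rewrite ltn_predL.
    have Hw0 : size w0 = k by rewrite /w0 Hszfs ?Hsflast.
    have Hpre : forall i, i < size C -> nth [::] fs i = take (sf i) w0.
      move=> i Hi.
      have Hile : i <= (size C).-1 by move: Hi; clear; lia.
      have Hle : rees_le (nth a0 (zip C fs) i) (nth a0 (zip C fs) (size C).-1).
        have [E|H] := sorted_nth_le (@rlt_trans disp P t) a0 Hsort (i:=i) (j:=(size C).-1)
                       Hile (ltac:(by rewrite Hszz)).
        + by rewrite E rle_refl.
        + by case/andP: H.
      move: Hle; rewrite !nth_zip // => /and3P[_ /= Hp _].
      by move: Hp; rewrite prefixE Hszfs // => /eqP ->.
    have Hw0' : size w0 == k by rewrite Hw0.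
    apply/mapP; exists (Tuple Hw0'); first by rewrite mem_enum.
    rewrite Ec /enc; congr (_ :: rcons (map _ (zip C _)) _).
    apply: (@eq_from_nth _ [::]); first by rewrite Hsz_mk Hfs.
    move=> i Hi; rewrite Hfs in Hi; by rewrite Hnth_mk // Hpre.
- by rewrite size_map -cardE card_tuple card_ord.
Qed.

Theorem proposition3p1 (disp : Order.disp_t) (P : finPOrderType disp) (n t : nat) :
  semipure P -> poset_length P n -> 1 <= t ->
  [/\ (* every maximal chain of hat(P * T_{t,n}) lies in some block [C,d] *)
      (forall c, @rees_hat_maxchain disp P n t c ->
         exists (C : seq P) (d : seq bool),
           [/\ maxchain_in predT (@poset_lt disp P) C, size d = (size C).-1 & (@rees_block disp P n t C d c)]),
      (* the blocks are pairwise disjoint *)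
      (forall (C1 C2 : seq P) (d1 d2 : seq bool) c,
         maxchain_in predT (@poset_lt disp P) C1 -> size d1 = (size C1).-1 ->
         maxchain_in predT (@poset_lt disp P) C2 -> size d2 = (size C2).-1 ->
         @rees_block disp P n t C1 d1 c -> @rees_block disp P n t C2 d2 c -> C1 = C2 /\ d1 = d2) &
      (* |[C,d]| = t^(d_1 + ... + d_m) *)
      (forall (C : seq P) (d : seq bool),
         maxchain_in predT (@poset_lt disp P) C -> size d = (size C).-1 ->
         exists l : seq (seq ((P * seq 'I_t) + bool)),
           [/\ uniq l, (forall c, c \in l <-> @rees_block disp P n t C d c)
             & size l = t ^ sumn [seq nat_of_bool b | b <- d]])].
Proof.
move=> Hsp Hlen _.
have [[s0 [_ Hs0]] _] := Hlen.
case: s0 Hs0 => [//|p0 _] _.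
split.
- move=> c Hc; exact: (part1 p0 Hsp Hc).
- move=> C1 C2 d1 d2 c _ Hd1 _ Hd2 B1 B2; exact: part2 Hd1 Hd2 B1 B2.
- move=> C d HC Hd; exact: (part3 t p0 Hsp Hlen HC Hd).
Qed.
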